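(* Let $(\Sigma,T)$ be a finite convergent length-reducing rewriting system such that $\Sigma=\Sigma^{-1}$ and $(\Sigma,T)$ presents a group $G$. Let $\Gamma$ denote the undirected Cayley graph of $G$ with respect to $\Sigma$. Then (1) $\Gamma$ is geodetic; and (2) if $u_0,u_1,\dots,u_{m-1},u_m=u_0$ is an isometrically embedded circuit in $\Gamma$ of length $m>2$, then $m=2n+1$ for some positive integer $n$ and $(x_1\cdots x_{n+1},\,x_m^{-1}\cdots x_{n+2}^{-1})\in T$, where for $1\le i\le m$, $x_i\in\Sigma$ is a letter with $x_i=_G u_{i-1}^{-1}u_i$.
   Context: A rewriting system $(\Sigma,T)$ has alphabet $\Sigma$ and rules $T\subseteq\Sigma^*\times\Sigma^*$, inducing rewrites $u\ell v\to urv$ for $(\ell,r)\in T$; the group presented is $\Sigma^*$ modulo the equivalence generated by $\to$. Finite: $\Sigma,T$ finite; length-reducing: $|\ell|>|r|$ for all rules; convergent: terminating (no infinite rewrite sequences) and confluent (any two words reachable by rewriting from a common word can be rewritten to a common word). $\Sigma=\Sigma^{-1}$ means for each letter $x$ there is a letter $x^{-1}\in\Sigma$ representing its inverse in $G$. The undirected Cayley graph $\Gamma(G,\Sigma)$ has vertex set $G$, distinct $g,h$ adjacent iff $g^{-1}h$ is represented by an element of $\Sigma\cup\Sigma^{-1}$. A graph is geodetic if between any two vertices there is a unique shortest path; $d$ is the path metric. A path $u_0,\dots,u_m$ is an embedded circuit of length $m$ if $u_0,\dots,u_{m-1}$ are distinct and $u_0=u_m$; it is isometrically embedded if $d(u_i,u_j)=\min\{j-i,m+i-j\}$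 for all $0\le i<j<m$. *)

(* Defs.v *)
From mathcomp Require Import all_boot.
From Stdlib Require Import Relations.

Set Implicit Arguments.
Unset Strict Implicit.
Unset Printing Implicit Defensive.

Definition rules (S : finType) := seq (seq S * seq S).

Definition rw (S : finType) (T : rules S) (w w' : seq S) : Prop :=
  exists (u v l r : seq S), (l, r) \in T /\ w = u ++ l ++ v /\ w' = u ++ r ++ v.

Definition rws (S : finType) (T : rules S) := clos_refl_trans (seq S) (@rw S T).

(* the equivalence generated by ->  (equality in the presented monoid/group) *)
Definition eqv (S : finType) (T : rules S) := clos_refl_sym_trans (seq S) (@rw S T).

Definition length_reducing (S : finType) (T : rules S) : Prop :=
  forall l r, (l, r) \in T -> size r < size l.

Definition terminating (S : finType) (T : rules S) : Prop :=
  ~ exists f : nat -> seq S, forall i, rw T (f i) (f i.+1).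

Definition confluent (S : finType) (T : rules S) : Prop :=
  forall w u v, rws T w u -> rws T w v -> exists z, rws T u z /\ rws T v z.

Definition convergent (S : finType) (T : rules S) : Prop :=
  terminating T /\ confluent T.

Definition presents_group (S : finType) (T : rules S) : Prop :=
  forall u : seq S, exists v, eqv T (u ++ v) [::] /\ eqv T (v ++ u) [::].

Definition inverse_closed (S : finType) (T : rules S) : Prop :=
  forall x : S, exists y : S, eqv T [:: x; y] [::] /\ eqv T [:: y; x] [::].

Definition is_inv_letter (S : finType) (T : rules S) (x y : S) : Prop :=
  eqv T [:: x; y] [::] /\ eqv T [:: y; x] [::].

(* Cayley graph Gamma(G, Sigma): vertices are group elements, represented by
   words (equality of vertices = eqv).  Distinct g, h are adjacent iff
   g^{-1} h is represented by a letter of Sigma or the inverse of one. *)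
Definition adj (S : finType) (T : rules S) (g h : seq S) : Prop :=
  ~ eqv T g h /\
  exists x : S, eqv T (g ++ [:: x]) h \/ eqv T (h ++ [:: x]) g.

(* s = [:: v_0; ...; v_k] is a path (of length k = size s - 1) from g to h *)
Definition is_path (S : finType) (T : rules S) (g h : seq S) (s : seq (seq S)) : Prop :=
  0 < size s /\
  eqv T (nth [::] s 0) g /\ eqv T (last [::] s) h /\
  forall i, i.+1 < size s -> adj T (nth [::] s i) (nth [::] s i.+1).

Definition shortest_path (S : finType) (T : rules S) (g h : seq S) (s : seq (seq S)) : Prop :=
  is_path T g h s /\ forall s', is_path T g h s' -> size s <= size s'.

Definition dist (S : finType) (T : rules S) (g h : seq S) (k : nat) : Prop :=
  exists s, shortest_path T g h s /\ size s = k.+1.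

Definition geodetic (S : finType) (T : rules S) : Prop :=
  forall g h : seq S,
    (exists s, shortest_path T g h s) /\
    (forall s s', shortest_path T g h s -> shortest_path T g h s' ->
       size s = size s' /\ forall i, i < size s -> eqv T (nth [::] s i) (nth [::] s' i)).

(* u_0, ..., u_m (u : nat -> word, only indices <= m matter) is an embedded
   circuit of length m *)
Definition embedded_circuit (S : finType) (T : rules S) (u : nat -> seq S) (m : nat) : Prop :=
  (forall i, i < m -> adj T (u i) (u i.+1)) /\
  (forall i j, i < j < m -> ~ eqv T (u i) (u j)) /\
  eqv T (u m) (u 0).

Definition isometric_circuit (S : finType) (T : rules S) (u : nat -> seq S) (m : nat) : Prop :=
  embedded_circuit T u m /\
  forall i j, i < j < m -> dist T (u i) (u j) (minn (j - i) (m + i - j)).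

(* Main.v *)
Require Import Defs.
From mathcomp Require Import all_boot.
From Stdlib Require Import Relations Classical.
From mathcomp Require Import zify.
Set Implicit Arguments.
Unset Strict Implicit.


Lemma eqv_refl (S : finType) (T : rules S) a : eqv T a a.
Proof. exact: rst_refl. Qed.
Lemma eqv_sym (S : finType) (T : rules S) a b : eqv T a b -> eqv T b a.
Proof. exact: rst_sym. Qed.
Lemma eqv_trans (S : finType) (T : rules S) a b c : eqv T a b -> eqv T b c -> eqv T a c.
Proof. exact: rst_trans. Qed.

Lemma rw_ctx (S : finType) (T : rules S) a b c d : rw T a b -> rw T (c ++ a ++ d) (c ++ b ++ d).
Proof.
case=> [u [v [l [r [Hl [-> ->]]]]]].
exists (c ++ u), (v ++ d), l, r; split => //; rewrite !catA //.
Qed.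

Lemma eqv_ctx (S : finType) (T : rules S) a b c d : eqv T a b -> eqv T (c ++ a ++ d) (c ++ b ++ d).
Proof.
elim.
- move=> x y H; apply: rst_step; exact: rw_ctx.
- move=> x; exact: rst_refl.
- move=> x y _ H; exact: rst_sym.
- move=> x y z _ H1 _ H2; exact: rst_trans H1 H2.
Qed.

Lemma eqv_catl (S : finType) (T : rules S) a b d : eqv T a b -> eqv T (a ++ d) (b ++ d).
Proof. move=> H; exact: (eqv_ctx [::] d H). Qed.
Lemma eqv_catr (S : finType) (T : rules S) a b c : eqv T a b -> eqv T (c ++ a) (c ++ b).
Proof. move=> H; have := eqv_ctx c [::] H; by rewrite !cats0. Qed.

Lemma rw_size (S : finType) (T : rules S) a b : length_reducing T -> rw T a b -> size b < size a.
Proof.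
move=> LR [u [v [l [r [Hl [-> ->]]]]]]; have := LR _ _ Hl; rewrite !size_cat => H. rewrite ltn_add2l ltn_add2r //.
Qed.

Definition irr (S : finType) (T : rules S) w := forall w', ~ rw T w w'.

Lemma rws_irr (S : finType) (T : rules S) a b : irr T a -> rws T a b -> b = a.
Proof.
move=> Hi /clos_rt_rt1n_iff H; case: H => // y z Hy _; by case: (Hi y).
Qed.

Lemma CR (S : finType) (T : rules S) a b : confluent T -> eqv T a b -> exists z, rws T a z /\ rws T b z.
Proof.
move=> Cf; elim.
- move=> x y H; exists y; split; [exact: rt_step | exact: rt_refl].
- move=> x; exists x; split; exact: rt_refl.
- move=> x y _ [z [H1 H2]]; by exists z.
- move=> x y z _ [z1 [H1 H2]] _ [z2 [H3 H4]].
  have [z3 [H5 H6]] := Cf _ _ _ H2 H3.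
  exists z3; split; [exact: rt_trans H1 H5 | exact: rt_trans H4 H6].
Qed.

Lemma irr_eqv (S : finType) (T : rules S) a b : confluent T -> irr T a -> irr T b -> eqv T a b -> a = b.
Proof.
move=> Cf Ha Hb H; have [z [H1 H2]] := CR Cf H.
by rewrite -(rws_irr Ha H1) -(rws_irr Hb H2).
Qed.

Lemma cancel_l (S : finType) (T : rules S) g a b : presents_group T -> eqv T (g ++ a) (g ++ b) -> eqv T a b.
Proof.
move=> PG H; have [v [_ Hv]] := PG g.
have H1 := eqv_catr v H.
have Ha := eqv_catl a Hv; have Hb := eqv_catl b Hv.
rewrite /= -catA in Ha; rewrite /= -catA in Hb.
apply: eqv_trans (eqv_sym Ha) _; exact: eqv_trans H1 Hb.
Qed.

Lemma adj_sym (S : finType) (T : rules S) a b : adj T a b -> adj T b a.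
Proof.
case=> H [x Hx]; split; first by move=> /eqv_sym.
exists x; tauto.
Qed.

Lemma adj_letter (S : finType) (T : rules S) a b : inverse_closed T -> adj T a b -> exists y, eqv T (a ++ [:: y]) b.
Proof.
move=> IC [_ [x [Hx|Hx]]]; first by exists x.
have [y [Hxy _]] := IC x; exists y.
have H1 := eqv_catl [:: y] (eqv_sym Hx).
apply: eqv_trans H1 _; rewrite -catA /=.
have := eqv_catr b Hxy; rewrite cats0; exact.
Qed.

Definition chainadj (S : finType) (T : rules S) (s : seq (seq S)) :=
  forall i, i.+1 < size s -> adj T (nth [::] s i) (nth [::] s i.+1).

Lemma path_word (S : finType) (T : rules S) : inverse_closed T -> forall s, 0 < size s -> chainadj T s ->
  exists w, size w = (size s).-1 /\ forall i, i < size s -> eqv T (nth [::] s 0 ++ take i w) (nth [::] s i).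
Proof.
move=> IC; elim=> // a s' IH _ Hc.
case: s' IH Hc => [|b s''] IH Hc.
  exists [::]; split => // [[|i]] // _; rewrite cats0; exact: eqv_refl.
have Hc' : chainadj T (b :: s'') by move=> i Hi; exact: (Hc i.+1).
have [w' [Hs Hw]] := IH isT Hc'.
have [y Hy] := adj_letter IC (Hc 0 isT).
exists (y :: w'); split; first by rewrite /= Hs.
move=> [|i] Hi /=; first by rewrite cats0; exact: eqv_refl.
have := Hw i Hi; rewrite /= => H.
apply: eqv_trans H; rewrite -cat1s catA.
exact: eqv_catl Hy.
Qed.

Lemma word_path (S : finType) (T : rules S) : forall w g, exists s, 0 < size s /\ eqv T (nth [::] s 0) g /\
   eqv T (last [::] s) (g ++ w) /\ chainadj T s /\ size s <= (size w).+1.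
Proof.
elim=> [|x w IH] g.
  exists [:: g]; split => //; split; first exact: eqv_refl.
  split; first by rewrite cats0; exact: eqv_refl.
  by split => // -[].
have [s' [Hs0 [Hh [Hl [Hc Hsz]]]]] := IH (g ++ [:: x]).
rewrite -catA /= in Hl.
case: (classic (eqv T g (g ++ [:: x]))) => Hg.
  exists s'; split => //; split; first exact: eqv_trans Hh (eqv_sym Hg).
  split => //; split => //=; lia.
exists (g :: s'); split => //; split; first exact: eqv_refl.
case: s' Hs0 Hh Hl Hc Hsz => // b s'' _ Hh Hl Hc Hsz.
split; first exact: Hl.
split; last by rewrite /= in Hsz *; lia.
move=> [|i] Hi /=; last exact: Hc.
split; first by move=> H; apply: Hg; exact: eqv_trans H Hh.
exists x; left; exact: eqv_sym.
Qed.

Lemma path_len_bound (S : finType) (T : rules S) g h k w : dist T g h k -> eqv T (g ++ w) h -> k <= size w.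
Proof.
move=> [s [[Hp Hmin] Hsz]] Hw.
have [s2 [H0 [Hh [Hl [Hc Hs2]]]]] := word_path T w g.
have : size s <= size s2 by apply: Hmin; do !split => //; exact: eqv_trans Hl Hw.
rewrite Hsz; lia.
Qed.

Lemma geo_irr (S : finType) (T : rules S) g h k w : length_reducing T -> dist T g h k -> eqv T (g ++ w) h -> size w <= k -> irr T w.
Proof.
move=> LR Hd Hw Hk w' Hr.
have Hs := rw_size LR Hr.
have H1 : eqv T (g ++ w') h.
  apply: eqv_trans _ Hw; apply: eqv_catr; apply: eqv_sym; exact: rst_step.
have := path_len_bound Hd H1; lia.
Qed.

Lemma ex_shortest (S : finType) (T : rules S) g h n : forall s, is_path T g h s -> size s <= n -> exists s', shortest_path T g h s'.
Proof.
elim: n => [|n IH] s Hp Hs.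
  by case: Hp => H _; lia.
case: (classic (exists s', is_path T g h s' /\ size s' < size s)) => [[s' [Hp' Hs']]|Hno].
  apply: (IH s') => //; lia.
exists s; split => // s' Hp'; rewrite leqNgt; apply/negP => H; apply: Hno; by exists s'.
Qed.

Lemma geodetic_thm (S : finType) (T : rules S) :
  length_reducing T -> convergent T -> inverse_closed T -> presents_group T -> geodetic T.
Proof.
move=> LR [_ Cf] IC PG g h; split.
  have [v [Hv _]] := PG g.
  have [s [H0 [Hh [Hl [Hc _]]]]] := word_path T (v ++ h) g.
  apply: (ex_shortest (s := s) (n := size s)) => //.
  do !split => //; apply: eqv_trans Hl _; rewrite catA.
  exact: (eqv_catl h Hv).
move=> s s' [Hp Hm] [Hp' Hm'].
have Hsz : size s = size s' by apply/eqP; rewrite eqn_leq Hm // Hm'.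
split => //.
case: Hp => [H0 [Hh [Hl Hc]]]; case: Hp' => [H0' [Hh' [Hl' Hc']]].
have [w [Hws Hw]] := path_word IC H0 Hc.
have [w' [Hws' Hw']] := path_word IC H0' Hc'.
have Hd : dist T g h (size s).-1.
  exists s; split; [by split | lia].
have E1 : eqv T (g ++ w) h.
  have := Hw (size s).-1 ltac:(lia); rewrite take_oversize ?Hws // nth_last => H.
  apply: eqv_trans _ Hl; apply: eqv_trans _ H; apply: eqv_catl; exact: eqv_sym.
have E2 : eqv T (g ++ w') h.
  have := Hw' (size s').-1 ltac:(lia); rewrite take_oversize ?Hws' // nth_last => H.
  apply: eqv_trans _ Hl'; apply: eqv_trans _ H; apply: eqv_catl; exact: eqv_sym.
have I1 := geo_irr LR Hd E1 (eq_leq Hws).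
have I2 : irr T w' by apply: geo_irr LR Hd E2 _; rewrite Hws' Hsz.
have Ew : w = w'.
  apply: irr_eqv Cf I1 I2 _; apply: (cancel_l (g := g)) PG _.
  exact: eqv_trans E1 (eqv_sym E2).
subst w'.
move=> i Hi.
have Hi' : i < size s' by rewrite -Hsz.
apply: eqv_trans (eqv_sym (Hw i Hi)) _.
apply: eqv_trans _ (Hw' i Hi').
apply: eqv_catl; exact: eqv_trans Hh (eqv_sym Hh').
Qed.

Theorem lemma9 (S : finType) (T : rules S) :
  length_reducing T -> convergent T -> inverse_closed T -> presents_group T ->
  geodetic T /\
  (forall (u : nat -> seq S) (m : nat),
     2 < m -> isometric_circuit T u m ->
     exists n : nat, 0 < n /\ m = n.*2.+1 /\
       forall (x xinv : nat -> S),
         (forall i, 1 <= i <= m -> eqv T (u i.-1 ++ [:: x i]) (u i)) ->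
         (forall i, 1 <= i <= m -> is_inv_letter T (x i) (xinv i)) ->
         (map x (iota 1 n.+1), map xinv (rev (iota n.+2 n))) \in T).
Proof.
move=> LR CV IC PG.
have GEO := geodetic_thm LR CV IC PG.
have Cf := CV.2.
split => // u m Hm [[Hadj [Hemb Hcl]] Hiso].
have Hmd := odd_double_half m.
set n := m./2 in Hmd.
case Hodd: (odd m) Hmd => /= Hmd; last first.
  exfalso.
  have Hd : dist T (u 0) (u n) n.
    have := Hiso 0 n ltac:(lia); by have -> : minn (n - 0) (m + 0 - n) = n by lia.
  case: (Hd) => [s0 [[Hp0 Hmin0] Hs0]].
  set s := mkseq u n.+1.
  set s' := mkseq (fun i => u (m - i)) n.+1.
  have Ps : shortest_path T (u 0) (u n) s.
    split; last by move=> s2 /Hmin0; rewrite Hs0 size_mkseq.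
    split; first by rewrite size_mkseq.
    split; first by rewrite nth_mkseq //; exact: eqv_refl.
    split; first by rewrite -nth_last size_mkseq nth_mkseq //; exact: eqv_refl.
    move=> i; rewrite size_mkseq => Hi; rewrite !nth_mkseq //; last by lia.
    apply: Hadj; lia.
  have Ps' : shortest_path T (u 0) (u n) s'.
    split; last by move=> s2 /Hmin0; rewrite Hs0 size_mkseq.
    split; first by rewrite size_mkseq.
    split; first by rewrite nth_mkseq // subn0.
    split; first by rewrite -nth_last size_mkseq nth_mkseq // (_ : m - n = n) //; [exact: eqv_refl | lia].
    move=> i; rewrite size_mkseq => Hi; rewrite !nth_mkseq //; last by lia.
    have -> : m - i = (m - i.+1).+1 by lia.
    apply: adj_sym; apply: Hadj; lia.
  have [_ Hu] := (GEO (u 0) (u n)).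
  have [_ H1] := Hu _ _ Ps Ps'.
  have := H1 1 ltac:(rewrite size_mkseq; lia).
  rewrite !nth_mkseq; try lia.
  apply: Hemb; lia.
exists n; split; first lia.
split; first lia.
move=> x xinv Hx Hinv.
have Wgen : forall d i, i + d <= m -> eqv T (u i ++ map x (iota i.+1 d)) (u (i + d)).
  elim=> [|d IH] i Hid.
    rewrite addn0 cats0; exact: eqv_refl.
  have -> : iota i.+1 d.+1 = iota i.+1 d ++ [:: i.+1 + d] by rewrite -[d.+1]addn1 iotaD.
  rewrite map_cat catA.
  apply: eqv_trans (eqv_catl _ (IH i ltac:(lia))) _.
  have := Hx (i + d).+1 ltac:(lia); rewrite /= addnS addSn //.
have Vgen : forall d k, k + d <= m -> eqv T (u (k + d) ++ map xinv (rev (iota k.+1 d))) (u k).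
  elim=> [|d IH] k Hkd.
    rewrite addn0 cats0; exact: eqv_refl.
  rewrite /= rev_cons map_rcons -cats1 catA addnS -addSn.
  apply: eqv_trans (eqv_catl _ (IH k.+1 ltac:(lia))) _.
  have Hxk := Hx k.+1 ltac:(lia); have [Hi1 _] := Hinv k.+1 ltac:(lia).
  apply: eqv_trans (eqv_catl _ (eqv_sym Hxk)) _.
  rewrite -catA /=.
  have := eqv_catr (u k) Hi1; rewrite cats0; exact.
set W := map x (iota 1 n.+1).
set V := map xinv (rev (iota n.+2 n)).
set Wp := map x (iota 1 n).
set Ws := map x (iota 2 n).
have EW : eqv T (u 0 ++ W) (u n.+1) by exact: (Wgen n.+1 0 ltac:(lia)).
have EWp : eqv T (u 0 ++ Wp) (u n) by exact: (Wgen n 0 ltac:(lia)).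
have EWs : eqv T (u 1 ++ Ws) (u n.+1) by exact: (Wgen n 1 ltac:(lia)).
have EV : eqv T (u 0 ++ V) (u n.+1).
  have := Vgen n n.+1 ltac:(lia); rewrite (_ : n.+1 + n = m); last by lia.
  move=> H; apply: eqv_trans H; apply: eqv_catl; exact: eqv_sym.
have D1 : dist T (u 0) (u n.+1) n.
  have := Hiso 0 n.+1 ltac:(lia); by have -> : minn (n.+1 - 0) (m + 0 - n.+1) = n by lia.
have D2 : dist T (u 0) (u n) n.
  have := Hiso 0 n ltac:(lia); by have -> : minn (n - 0) (m + 0 - n) = n by lia.
have D3 : dist T (u 1) (u n.+1) n.
  have := Hiso 1 n.+1 ltac:(lia); by have -> : minn (n.+1 - 1) (m + 1 - n.+1) = n by lia.
have IWp : irr T Wp by apply: geo_irr LR D2 EWp _; rewrite size_map size_iota.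
have IWs : irr T Ws by apply: geo_irr LR D3 EWs _; rewrite size_map size_iota.
have IV : irr T V by apply: geo_irr LR D1 EV _; rewrite size_map size_rev size_iota.
have EWV : eqv T W V by apply: (cancel_l (g := u 0)) PG _; exact: eqv_trans EW (eqv_sym EV).
have [W1 HW1] : exists W1, rw T W W1.
  apply: NNPP => Hn.
  have IW : irr T W by move=> w' Hw'; apply: Hn; exists w'.
  have := f_equal size (irr_eqv Cf IW IV EWV).
  rewrite /W /V !size_map size_rev !size_iota; lia.
have HW1' := HW1.
case: HW1 => [a [b [l [r [Hlr [HWe HW1e]]]]]].
have Ha : a = [::].
  case: a HWe HW1e => // y a' HWe _.
  exfalso; rewrite /W (_ : iota 1 n.+1 = 1 :: iota 2 n) // /= in HWe.
  case: HWe => _ HWs; apply: (IWs (a' ++ r ++ b)).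
  exists a', b, l, r; split => //; split => //; exact: HWs.
have Hb : b = [::].
  case/lastP: b HWe HW1e => // b' y HWe _.
  exfalso; rewrite /W (_ : iota 1 n.+1 = iota 1 n ++ [:: n.+1]) in HWe; last first.
    by rewrite -[n.+1]addn1 iotaD add1n addn1.
  rewrite map_cat cats1 -!rcons_cat in HWe.
  case: (rcons_inj HWe) => HWp _; apply: (IWp (a ++ r ++ b')).
  exists a, b', l, r; split => //; split => //; exact: HWp.
subst a b; rewrite cats0 /= in HWe HW1e.
rewrite cats0 in HW1e.
subst l r.
have Hsr := LR _ _ Hlr.
have Er : eqv T (u 0 ++ W1) (u n.+1).
  apply: eqv_trans _ EW; apply: eqv_catr; apply: eqv_sym; exact: rst_step.
have Hn1 := path_len_bound D1 Er.
have HsW : size W = n.+1 by rewrite size_map size_iota.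
have Ir : irr T W1.
  apply: geo_irr LR D1 Er _; move: Hsr; rewrite HsW ltnS //.
have : W1 = V.
  apply: irr_eqv Cf Ir IV _; apply: (cancel_l (g := u 0)) PG _; exact: eqv_trans Er (eqv_sym EV).
move=> E; rewrite -E; exact: Hlr.
Qed.
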